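(* Let $R$ be a commutative ring which is free as an abelian group with $\mathbb{Z}$-basis $V=\{v_k\}_{k\in I}$, let $n\ge2$, $p$ a prime and $r\ge1$, and assume $p\ne2$ or $r>1$. Then the $p$-th power map $X\mapsto X^p$ induces a well-defined group isomorphism $$\psi^p_r:\Gamma(SL_n(R),p^r)/\Gamma(SL_n(R),p^{r+1})\longrightarrow\Gamma(SL_n(R),p^{r+1})/\Gamma(SL_n(R),p^{r+2}),$$ and $\psi^p_r(A_{ij,k,r})=A_{ij,k,r+1}$ for all $1\le i,j\le n$ with $i+j<2n$ and $k\in I$.
   Context: $\Gamma(SL_n(R),p^m)=\ker\big(SL_n(R)\to SL_n(R/p^mR)\big)$. For $m\ge1$ the quotient $\Gamma(SL_n(R),p^m)/\Gamma(SL_n(R),p^{m+1})$ is identified (via reduction mod $p^{m+1}$) with the kernel of $SL_n(R/p^{m+1}R)\to SL_n(R/p^mR)$, and in it $A_{ij,k,m}$ denotes the reduction mod $p^{m+1}$ of $1+p^mv_ke_{ij}$ if $i\ne j$ and of $1+p^mv_k(e_{ii}-e_{nn})$ if $i=j$, where $e_{ij}$ is the matrix unit with $1$ in position $(i,j)$. *)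

(* Defs.v *)
From HB Require Import structures.
From mathcomp Require Import all_boot all_order all_algebra.
Set Implicit Arguments. Unset Strict Implicit. Unset Printing Implicit Defensive.
Import GRing.Theory.
Local Open Scope ring_scope.

Definition is_Zbasis (R : comPzRingType) (I : eqType) (v : I -> R) : Prop :=
  (forall x : R, exists (s : seq I) (c : I -> int),
      x = \sum_(k <- s) v k *~ c k) /\
  (forall (s : seq I) (c : I -> int), uniq s ->
      \sum_(k <- s) v k *~ c k = 0 -> forall k, k \in s -> c k = 0).

Definition mx_congr (R : comPzRingType) (n : nat) (q m : nat) (X Y : 'M[R]_n) : Prop :=
  forall i j, exists y : R, X i j - Y i j = (q ^ m)%:R * y.

Definition Gamma (R : comPzRingType) (n : nat) (q m : nat) (X : 'M[R]_n) : Prop :=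
  \det X = 1 /\ mx_congr q m X 1%:M.

Definition mxpow (R : comPzRingType) (n : nat) (X : 'M[R]_n) (e : nat) : 'M[R]_n :=
  iter e (mulmx X) 1%:M.

(* The matrix 1 + q^m x e_ij (i <> j), resp. 1 + q^m x (e_ii - e_nn) (i = j);
   indices are 0-based, so e_nn is the entry (n-1, n-1). *)
Definition Amx (R : comPzRingType) (n : nat) (q m : nat) (i j : 'I_n) (x : R)
  : 'M[R]_n :=
  \matrix_(a, b)
    ((a == b)%:R + (q ^ m)%:R * x *
       (if i == j then
          ((a == i) && (b == i))%:R
          - (((a : nat) == n.-1) && ((b : nat) == n.-1))%:R
        else ((a == i) && (b == j))%:R)).

(* Main.v *)
Require Import Defs.
From mathcomp Require Import all_boot all_order all_algebra zify ring.
Set Implicit Arguments. Unset Strict Implicit. Unset Printing Implicit Defensive.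
Import GRing.Theory.
Local Open Scope ring_scope.

Definition cg (R : comPzRingType) (n : nat) (q e : nat) (X Y : 'M[R]_n) : Prop :=
  exists B : 'M[R]_n, X - Y = (q ^ e)%:R *: B.

Lemma cgP (R : comPzRingType) (n q e : nat) (X Y : 'M[R]_n) :
  mx_congr q e X Y <-> cg q e X Y.
Proof.
split.
  move=> H.
  have H' : forall i j, exists y : R, X i j - Y i j == (q ^ e)%:R * y.
    by move=> i j; have [y hy] := H i j; exists y; apply/eqP.
  exists (\matrix_(i, j) xchoose (H' i j)).
  apply/matrixP => i j; rewrite !mxE; exact/eqP/(xchooseP (H' i j)).
by move=> [B hB] i j; exists (B i j); have := congr1 (fun M : 'M[R]_n => M i j) hB; rewrite !mxE.
Qed.

Lemma cg_refl (R : comPzRingType) (n q e : nat) (X : 'M[R]_n) : cg q e X X.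
Proof. by exists 0; rewrite subrr scaler0. Qed.

Lemma cg_sym (R : comPzRingType) (n q e : nat) (X Y : 'M[R]_n) : cg q e X Y -> cg q e Y X.
Proof. by move=> [B hB]; exists (- B); rewrite scalerN -hB opprB. Qed.

Lemma cg_trans (R : comPzRingType) (n q e : nat) (X Y Z : 'M[R]_n) : cg q e X Y -> cg q e Y Z -> cg q e X Z.
Proof.
move=> [B hB] [C hC]; exists (B + C).
by rewrite scalerDr -hB -hC addrA subrK.
Qed.

Lemma cg_add (R : comPzRingType) (n q e : nat) (X Y X' Y' : 'M[R]_n) :
  cg q e X Y -> cg q e X' Y' -> cg q e (X + X') (Y + Y').
Proof.
move=> [B hB] [C hC]; exists (B + C).
by rewrite scalerDr -hB -hC opprD addrACA.
Qed.

Lemma cg_opp (R : comPzRingType) (n q e : nat) (X Y : 'M[R]_n) : cg q e X Y -> cg q e (- X) (- Y).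
Proof. by move=> [B hB]; exists (- B); rewrite scalerN -hB opprB opprK addrC. Qed.

Lemma cg_mul (R : comPzRingType) (n q e : nat) (X Y X' Y' : 'M[R]_n) :
  cg q e X Y -> cg q e X' Y' -> cg q e (X * X') (Y * Y').
Proof.
move=> [B hB] [C hC]; exists (B * X' + Y * C).
have -> : X * X' - Y * Y' = (X - Y) * X' + Y * (X' - Y').
  by rewrite mulrBl mulrBr addrA subrK.
rewrite hB hC scalerDr.
have E1 := scalemxAl ((q^e)%:R) B X'. have E2 := scalemxAr ((q^e)%:R) Y C. by rewrite [in RHS]E1 [in RHS]E2.
Qed.

Lemma cg_le (R : comPzRingType) (n q e : nat) e' (X Y : 'M[R]_n) : (e <= e')%N -> cg q e' X Y -> cg q e X Y.
Proof.
move=> le [B hB]; exists ((q ^ (e' - e))%:R *: B).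
by rewrite hB scalerA -natrM -expnD subnKC.
Qed.

Lemma cg_mult (R : comPzRingType) (n q e : nat) e' (X : 'M[R]_n) B : (e <= e')%N ->
  cg q e (X + (q ^ e')%:R *: B) X.
Proof.
move=> le; apply: (@cg_le _ _ _ _ e') => //.
by exists B; rewrite addrC addKr.
Qed.
Lemma natdiv_key (p r k : nat) : prime p -> (1 <= r)%N -> (p != 2%N \/ (1 < r)%N) ->
  (2 <= k <= p)%N -> (p ^ r.+2 %| 'C(p, k) * (p ^ r) ^ k)%N.
Proof.
move=> pp r1 hp /andP[k2 kp]; have p2 := prime_gt1 pp.
rewrite -expnM.
have [klt|kge] := ltnP k p.
  have hd : (p %| 'C(p, k))%N by apply: prime_dvd_bin => //; rewrite klt andbT; lia.
  rewrite expnS; apply: dvdn_mul => //; apply: dvdn_exp2l; nia.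
have -> : k = p by lia.
rewrite binn mul1n; apply: dvdn_exp2l.
case: hp => [hp|hr]; last by nia.
have : (3 <= p)%N by move: hp p2; clear; case: p => [|[|[|]]].
nia.
Qed.

Lemma sum_mult (R : pzRingType) (V : lmodType R) (I : eqType) (s : seq I) (F : I -> V) (c : R) :
  (forall i, i \in s -> exists B, F i = c *: B) -> exists B, \sum_(i <- s) F i = c *: B.
Proof.
elim: s => [|a s IH] H; first by exists 0; rewrite big_nil scaler0.
have [B hB] := IH (fun i hi => H i (mem_behead (s:=a :: s) hi)).
have [C hC] := H a (mem_head _ _); exists (C + B); by rewrite big_cons hB hC scalerDr.
Qed.
Lemma mxexprZ (R : comPzRingType) n (a : R) (B : 'M[R]_n) i : (a *: B) ^+ i = a ^+ i *: B ^+ i.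
Proof.
elim: i => [|i IH]; first by rewrite !expr0 scale1r.
rewrite !exprS IH.
have -> : a *: B * (a ^+ i *: B ^+ i) = a *: (B *m (a ^+ i *: B ^+ i)) by rewrite scalemxAl.
by rewrite -scalemxAr scalerA.
Qed.

Lemma pow1 (R : comPzRingType) (n p r : nat) (B : 'M[R]_n) : prime p -> (1 <= r)%N ->
  (p != 2%N \/ (1 < r)%N) ->
  cg p r.+2 ((1 + (p ^ r)%:R *: B) ^+ p) (1 + (p ^ r.+1)%:R *: B).
Proof.
move=> pp r1 hp; have p2 := prime_gt1 pp.
have key := natdiv_key pp r1 hp.
rewrite addrC exprD1n -(big_mkord xpredT (fun i => ((p ^ r)%:R *: B) ^+ i *+ 'C(p, i))).
rewrite big_ltn // big_ltn; last lia.
rewrite expr0 bin0 expr1 bin1.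
have [C hC] : exists C : 'M[R]_n, \sum_(2 <= i < p.+1)
   ((p ^ r)%:R *: B) ^+ i *+ 'C(p, i) = (p ^ r.+2)%:R *: C.
  apply: sum_mult => i; rewrite mem_index_iota => hi.
  idtac.
  rewrite mxexprZ scalerMnl -natrX -mulr_natr -natrM.
  have : (p ^ r.+2 %| 'C(p, i) * (p ^ r) ^ i)%N by apply: key; lia.
  move/dvdnP => [k hk]; exists (k%:R *: B ^+ i).
  by rewrite scalerA -natrM [(p ^ r.+2 * k)%N]mulnC -hk mulnC.
exists C; rewrite -hC.
have -> : (p ^ r)%:R *: B *+ p = (p ^ r.+1)%:R *: B.
  by rewrite scalerMnl -mulr_natr -natrM -expnSr.
rewrite mulr1n.
by rewrite opprD addrACA subrr add0r addrAC subrr add0r.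
Qed.

Lemma mxpowE (R : comPzRingType) n (X : 'M[R]_n) e : mxpow X e = X ^+ e.
Proof. by elim: e => // e IH; rewrite /mxpow iterS -/(mxpow X e) IH exprS. Qed.

Lemma cg_ex (R : comPzRingType) (n q e : nat) (X Y : 'M[R]_n) :
  cg q e X Y -> exists B, X = Y + (q ^ e)%:R *: B.
Proof. by move=> [B hB]; exists B; rewrite -hB addrC subrK. Qed.

Lemma scaleS (R : comPzRingType) (n q e : nat) (B : 'M[R]_n) :
  (q ^ e.+1)%:R *: B = (q ^ e)%:R *: (q%:R *: B).
Proof. by rewrite scalerA -natrM -expnSr. Qed.

Lemma pow2 (R : comPzRingType) (n p r : nat) (X Y : 'M[R]_n) : prime p -> (1 <= r)%N ->
  (p != 2%N \/ (1 < r)%N) -> cg p r.+1 X Y -> cg p r Y 1 ->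
  cg p r.+2 (X ^+ p) (Y ^+ p).
Proof.
move=> pp r1 hp hXY hY.
have [B hB] := cg_ex hY; have [E hE] := cg_ex hXY.
have hX : X = 1 + (p ^ r)%:R *: (B + p%:R *: E).
  by rewrite hE hB scalerDr -scaleS addrA.
apply: cg_trans; first by rewrite hX; exact: pow1.
apply: (@cg_trans _ _ _ _ _ (1 + (p ^ r.+1)%:R *: B)).
  rewrite scalerDr addrA scaleS scalerA -natrM -expnSr -scaleS.
  exact: cg_mult.
by rewrite hB; apply: cg_sym; exact: pow1.
Qed.

Lemma iterop_add (V : zmodType) (x : V) n : iterop n +%R x 0 = x *+ n.
Proof. rewrite Monoid.iteropE; elim: n => // n IH; by rewrite iterS IH mulrS. Qed.

Lemma tfree (R : comPzRingType) (I : eqType) (v : I -> R) : is_Zbasis v ->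
  forall (m : nat) (x : R), (0 < m)%N -> m%:R * x = 0 -> x = 0.
Proof.
move=> [hsp hli] m x m0 hx; have [s [c ex]] := hsp x.
pose c' k := c k * (count_mem k s)%:Z.
have E : x = \sum_(k <- undup s) v k *~ c' k.
  rewrite ex -big_undup_iterop_count; apply: eq_bigr => k _.
  by rewrite iterop_add /c' mulrzA.
have E2 : \sum_(k <- undup s) v k *~ (c' k * m%:Z) = 0.
  apply: etrans hx; rewrite E mulr_sumr; apply: eq_bigr => k _.
  by rewrite mulr_natl mulrzA.
have h0 := hli _ _ (undup_uniq s) E2.
rewrite E big1_seq // => k /andP[_ hk].
have := h0 k hk; move/eqP; rewrite mulf_eq0 => /orP[/eqP -> | ]; first by rewrite mulr0z.
by case: (m) m0.
Qed.

Lemma cancelp (R : comPzRingType) (I : eqType) (v : I -> R) : is_Zbasis v ->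
  forall (p e : nat) (x y : R), (0 < p)%N -> (p ^ e)%:R * x = (p ^ e.+1)%:R * y ->
  x = p%:R * y.
Proof.
move=> hb p e x y p0 h; apply/eqP; rewrite -subr_eq0; apply/eqP.
apply: (tfree hb (m := (p ^ e)%N)); first by rewrite expn_gt0 p0.
by rewrite mulrBr h expnSr natrM mulrA subrr.
Qed.

Lemma det_pow (R : comPzRingType) n (X : 'M[R]_n) e : \det (X ^+ e) = \det X ^+ e.
Proof.
elim: e => [|e IH]; first by rewrite !expr0 det1.
by rewrite !exprS -IH -det_mulmx.
Qed.

Lemma mul_lin (R : comPzRingType) n (a : R) (B C : 'M[R]_n) :
  (1 + a *: B) * (1 + a *: C) = 1 + a *: (B + C) + (a * a) *: (B * C).
Proof.
rewrite mulrDl !mulrDr !mul1r mulr1 scalerDr.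
have -> : a *: B * (a *: C) = (a * a) *: (B * C).
  by rewrite -[a *: B * _]/(a *: B *m (a *: C)) -scalemxAl -scalemxAr scalerA.
by rewrite !addrA (addrAC 1).
Qed.

Lemma sqp (R : comPzRingType) n (p e e' : nat) (B : 'M[R]_n) :
  ((p ^ e)%:R * (p ^ e')%:R) *: B = (p ^ (e + e'))%:R *: B.
Proof. by rewrite -natrM -expnD. Qed.

Definition Mx (R : comPzRingType) (n : nat) (i j : 'I_n) (x : R) : 'M[R]_n :=
  \matrix_(a, b) (x *
       (if i == j then
          ((a == i) && (b == i))%:R
          - (((a : nat) == n.-1) && ((b : nat) == n.-1))%:R
        else ((a == i) && (b == j))%:R)).

Lemma AmxE (R : comPzRingType) (n q e : nat) (i j : 'I_n) (x : R) :
  Amx q e i j x = 1 + (q ^ e)%:R *: Mx i j x.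
Proof. by apply/matrixP => a b; rewrite !mxE mulrA. Qed.

Lemma Gamma_ex (R : comPzRingType) (n q e : nat) (X : 'M[R]_n) :
  Gamma q e X -> exists B : 'M[R]_n, X = 1 + (q ^ e)%:R *: B.
Proof. by move=> [_ /cgP /cg_ex]. Qed.

Definition Tv (R : comPzRingType) (n : nat) (i j : 'I_n) (x : R) : 'M[R]_n :=
  1 + x *: delta_mx i j.

Lemma Tv_entry (R : comPzRingType) (n : nat) (i j : 'I_n) (x : R) c d :
  Tv i j x c d = (c == d)%:R + x * ((c == i) && (d == j))%:R.
Proof. by rewrite !mxE. Qed.

Lemma mulTv_entry (R : comPzRingType) (n : nat) (A : 'M[R]_n) (i j : 'I_n) (x : R) c d :
  (A * Tv i j x) c d = A c d + x * A c i * (d == j)%:R.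
Proof.
rewrite /Tv mulrDr mulr1 !mxE.
congr (_ + _).
rewrite (bigD1 i) //= big1 ?addr0 => [|k ki]; rewrite !mxE.
  by rewrite eqxx /= mulrA (mulrC x).
by rewrite (negbTE ki) /= !mulr0.
Qed.

Lemma det_Tv (R : comPzRingType) (n : nat) (i j : 'I_n) (x : R) :
  i != j -> \det (Tv i j x) = 1.
Proof.
wlog lt : i j x / (j < i)%N.
  move=> H ij; have [lt|ge] := ltnP j i; first exact: H.
  rewrite -det_tr /Tv linearD /= trmx1 linearZ /= trmx_delta.
  apply: H; last by rewrite eq_sym.
  by rewrite ltn_neqAle ge andbT; apply: contra ij => /eqP /val_inj ->.
move=> ij; rewrite det_trig.
  by rewrite big1 // => k _; rewrite Tv_entry eqxx; case: (k =P i) => [->|]; 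
     [rewrite (negbTE ij) mulr0 addr0 | rewrite mulr0 addr0].
apply/forallP => a; apply/forallP => b; apply/implyP => ab.
rewrite Tv_entry.
have -> : (a == b) = false by apply/negbTE; rewrite neq_ltn ab.
case: (a =P i) => [ai|]; case: (b =P j) => [bj|] //=; rewrite ?mulr0 ?addr0 //.
by exfalso; move: ab lt; rewrite ai bj; lia.
Qed.

Lemma M_exact (R : comPzRingType) (n : nat) (a b : 'I_n) (u : R) : a != b ->
  Tv b a 1 * Tv a b (- u) * Tv b a (-1) =
  1 + u *: (delta_mx a a - delta_mx a b + delta_mx b a - delta_mx b b).
Proof.
move=> ab; apply/matrixP => c d.
rewrite !mulTv_entry !Tv_entry !mxE eqxx.
have ba : (b == a) = false by rewrite eq_sym; exact: negbTE.
case: (c =P a) => [->|ca]; case: (d =P a) => [->|da];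
  rewrite ?eqxx ?(negbTE ab) ?ba /=;
  case: (c =P b) => [cb|cb]; case: (d =P b) => [db|db]; subst;
  rewrite ?eqxx ?(negbTE ab) ?ba /=; try ring.
Qed.

Definition good (R : comPzRingType) (n : nat) (t : R) (A B : 'M[R]_n) : Prop :=
  exists W, A = 1 + t *: (B + t *: W).

Lemma good1 (R : comPzRingType) (n : nat) (t : R) : good t (1 : 'M[R]_n) 0.
Proof. by exists 0; rewrite scaler0 addr0 scaler0 addr0. Qed.

Lemma good_mul (R : comPzRingType) (n : nat) (t : R) (A A' B B' : 'M[R]_n) :
  good t A B -> good t A' B' -> good t (A * A') (B + B').
Proof.
move=> [W ->] [W' ->]; exists (W + W' + (B + t *: W) * (B' + t *: W')).
rewrite mul_lin; rewrite !scalerDr -!addrA; congr (_ + _).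
rewrite !scalerA; congr (_ + _); rewrite !addrA; congr (_ + _).
by rewrite (addrC (_ *: W)).

Qed.

Lemma good_prod (R : comPzRingType) (n : nat) (t : R) (I : Type) (s : seq I) (P : pred I)
  (F G : I -> 'M[R]_n) :
  (forall i, P i -> good t (F i) (G i)) ->
  good t (\prod_(i <- s | P i) F i) (\sum_(i <- s | P i) G i).
Proof.
move=> H; apply: (big_ind2 (good t)); [exact: good1 | | exact: H].
by move=> *; exact: good_mul.
Qed.

Lemma det_prod1 (R : comPzRingType) (n : nat) (I : Type) (s : seq I) (P : pred I)
  (F : I -> 'M[R]_n) :
  (forall i, P i -> \det (F i) = 1) -> \det (\prod_(i <- s | P i) F i) = 1.
Proof.
move=> H; apply: (big_ind (fun A : 'M[R]_n => \det A = 1)) => //; first exact: det1.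
by move=> x y hx hy; rewrite -[x * y]/(x *m y) det_mulmx hx hy mulr1.
Qed.

Lemma good_Tv (R : comPzRingType) (n : nat) (t c : R) (i j : 'I_n) :
  good t (Tv i j (t * c)) (c *: delta_mx i j).
Proof. by exists 0; rewrite scaler0 addr0 scalerA. Qed.

Definition Pc (R : comPzRingType) (n : nat) (a b : 'I_n) (u : R) : 'M[R]_n :=
  Tv b a 1 * Tv a b (- u) * Tv b a (-1) * Tv a b u * Tv b a (- u).

Lemma good_Pc (R : comPzRingType) (n : nat) (t c : R) (a b : 'I_n) : a != b ->
  good t (Pc a b (t * c)) (c *: (delta_mx a a - delta_mx b b)).
Proof.
move=> ab; rewrite /Pc M_exact //.
have -> : c *: (delta_mx a a - delta_mx b b) =
  c *: (delta_mx a a - delta_mx a b + delta_mx b a - delta_mx b b) + c *: delta_mx a b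
  + (- c) *: delta_mx b a.
  by apply/matrixP => x y; rewrite !mxE; ring.
apply: good_mul; last by rewrite -mulrN; exact: good_Tv.
apply: good_mul; last exact: good_Tv.
by exists 0; rewrite scaler0 addr0 scalerA.
Qed.

Lemma det_Pc (R : comPzRingType) (n : nat) (a b : 'I_n) (u : R) : a != b -> \det (Pc a b u) = 1.
Proof.
move=> ab; have ba : b != a by rewrite eq_sym.
by rewrite /Pc -![_ * _]/(_ *m _) !det_mulmx !det_Tv // !mulr1.
Qed.

Lemma sum_ind (R : comPzRingType) (n : nat) (X : R) (c : 'I_n) :
  \sum_(i : 'I_n) (i == c)%:R * X = X.
Proof.
rewrite (bigD1 c) //= eqxx mul1r big1 ?addr0 // => i ic.
by rewrite (negbTE ic) mul0r.
Qed.

Lemma sum2_entry (R : comPzRingType) (n : nat) (P : 'I_n -> 'I_n -> bool)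
  (F : 'I_n -> 'I_n -> R) c d :
  (\sum_i \sum_(j | P i j) F i j *: delta_mx i j) c d = if P c d then F c d else 0.
Proof.
have inner : forall i, (\sum_(j | P i j) F i j *: delta_mx i j) c d =
    (i == c)%:R * (if P c d then F c d else 0).
  move=> i; rewrite summxE; case: (i =P c) => [->|ic]; last first.
    by rewrite mul0r big1 // => j _; rewrite !mxE (eq_sym c); case: (i =P c) => // _; rewrite mulr0.
  rewrite mul1r; case: ifP => Pcd.
    rewrite (bigD1 d) //= big1 ?addr0 => [|j /andP[_ jd]]; rewrite !mxE !eqxx ?mulr1 //.
    by rewrite (eq_sym d) (negbTE jd) mulr0.
  rewrite big1 // => j Pj; rewrite !mxE eqxx /=.
  case: (d =P j) => [dj|]; last by rewrite mulr0.
  by move: Pcd; rewrite dj Pj.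
rewrite summxE; under eq_bigr do rewrite inner.
exact: sum_ind.
Qed.

Lemma sum1_entry (R : comPzRingType) (n : nat) (P : 'I_n -> bool)
  (F : 'I_n -> R) c d :
  (\sum_(i | P i) F i *: delta_mx i i) c d = if (c == d) && P c then F c else 0.
Proof.
rewrite summxE; case: (c =P d) => [<-|cd] /=.
  case: ifP => Pc.
    rewrite (bigD1 c) //= big1 ?addr0 => [|i /andP[_ ic]]; rewrite !mxE ?eqxx ?mulr1 //.
    by rewrite (eq_sym c) (negbTE ic) mulr0.
  rewrite big1 // => i Pi; rewrite !mxE; case: (c =P i) => [ci|]; last by rewrite mulr0.
  by move: Pc; rewrite ci Pi.
rewrite big1 // => i _; rewrite !mxE; case: (c =P i) => [ci|]; last by rewrite mulr0.
case: (d =P i) => [di|]; last by rewrite andbF mulr0.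
by exfalso; apply: cd; rewrite ci di.
Qed.

Definition Btot (R : comPzRingType) (n : nat) (C : 'M[R]_n) (N : 'I_n) : 'M[R]_n :=
  \sum_i \sum_(j | j != i) C i j *: delta_mx i j +
  \sum_(i | i != N) C i i *: (delta_mx i i - delta_mx N N).

Lemma BtotE (R : comPzRingType) (n : nat) (C : 'M[R]_n) (N : 'I_n) :
  Btot C N = C - (\tr C) *: delta_mx N N.
Proof.
have E : \sum_(i | i != N) C i i *: (delta_mx i i - delta_mx N N) =
   \sum_(i | i != N) C i i *: delta_mx i i - (\sum_(i | i != N) C i i) *: delta_mx N N.
  by rewrite scaler_suml -sumrB; apply: eq_bigr => i _; rewrite scalerBr.
rewrite /Btot E; apply/matrixP => c d.
rewrite !mxE sum2_entry sum1_entry /mxtrace [\sum_i C i i](bigD1 N) //=.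
case: (c =P d) => [<-|cd] /=.
  rewrite eqxx /=; case: (c =P N) => [->|cN] /=; rewrite ?eqxx /=.
    by rewrite !mulr1; ring.
  by rewrite !mulr0 !subr0 add0r.
have cdf : (c == d) = false by apply/negbTE/eqP.
rewrite [d == c]eq_sym cdf /=.
have -> : ((c == N) && (d == N)) = false.
  by apply/negbTE; apply/negP => /andP[/eqP cN /eqP dN]; apply: cd; rewrite cN dN.
by rewrite !mulr0 !subr0 addr0.
Qed.

Definition dr (R : comPzRingType) (c x : R) : Prop := exists y, x = c * y.

Lemma det_cg (R : comPzRingType) (n q e : nat) (A B : 'M[R]_n) :
  cg q e A B -> dr (q ^ e)%:R (\det A - \det B).
Proof.
move=> /cgP H.
pose Q := fun x y : R => dr (q ^ e)%:R (x - y).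
have Qadd : forall x1 x2 y1 y2, Q x1 x2 -> Q y1 y2 -> Q (x1 + y1) (x2 + y2).
  move=> x1 x2 y1 y2 [a ha] [b hb]; exists (a + b).
  by rewrite mulrDr -ha -hb opprD addrACA.
have Qmul : forall x1 x2 y1 y2, Q x1 x2 -> Q y1 y2 -> Q (x1 * y1) (x2 * y2).
  move=> x1 x2 y1 y2 [a ha] [b hb]; exists (a * y1 + x2 * b).
  have -> : x1 * y1 - x2 * y2 = (x1 - x2) * y1 + x2 * (y1 - y2).
    by rewrite mulrBl mulrBr addrA subrK.
  by rewrite ha hb; ring.
rewrite /determinant; apply: (big_ind2 Q); [by exists 0; rewrite subrr mulr0 | exact: (Qadd) |].
move=> s _; apply: (Qmul); first by exists 0; rewrite subrr mulr0.
apply: (big_ind2 Q); [by exists 0; rewrite subrr mulr0 | exact: (Qmul) |].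
by move=> i _; have [y hy] := H i (perm.fun_of_perm s i); exists y.
Qed.

Lemma det_diagN (R : comPzRingType) (n : nat) (N : 'I_n) (a : R) :
  \det (1 - a *: delta_mx N N) = 1 - a.
Proof.
rewrite det_trig.
  rewrite (bigD1 N) //= big1 ?mulr1 => [|i iN]; rewrite !mxE ?eqxx ?mulr1 //.
  by rewrite (negbTE iN) mulr0 subr0.
apply/forallP => x; apply/forallP => y; apply/implyP => xy.
rewrite !mxE.
have -> : (x == y) = false by apply/negbTE; rewrite neq_ltn xy.
case: (x =P N) => [xN|]; case: (y =P N) => [yN|] //=; rewrite ?mulr0 ?subr0 //.
by move: xy; rewrite xN yN ltnn.
Qed.

Lemma surj (R : comPzRingType) (I : eqType) (v : I -> R) (n p r : nat) :
  is_Zbasis v -> (2 <= n)%N -> prime p -> (1 <= r)%N -> (p != 2%N \/ (1 < r)%N) ->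
  forall Z : 'M[R]_n, Gamma p r.+1 Z ->
     exists X : 'M[R]_n, Gamma p r X /\ mx_congr p r.+2 (mxpow X p) Z.
Proof.
move=> hb n2 pp r1 hp Z hZ; have p0 := prime_gt0 pp.
have [C hC] := Gamma_ex hZ.
pose N : 'I_n := Ordinal (ltn_trans (isT : (0 < 1)%N) n2).
pose t : R := (p ^ r)%:R.
pose Y := (\prod_i \prod_(j | j != i) Tv i j (t * C i j)) *
          \prod_(i | i != N) Pc i N (t * C i i).
have gY : good t Y (Btot C N).
  apply: good_mul; apply: good_prod => i iN; last exact: good_Pc.
  by apply: good_prod => j _; exact: good_Tv.
have dY : \det Y = 1.
  rewrite -[Y]/(_ *m _) det_mulmx !det_prod1 ?mulr1 //.
    by move=> i; exact: det_Pc.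
  by move=> i _; apply: det_prod1 => j ji; apply: det_Tv; rewrite eq_sym.
have [W hW] := gY.
have hY1 : cg p r.+1 Y (1 + t *: Btot C N).
  rewrite hW scalerDr addrA scalerA sqp; apply: cg_mult; lia.
have hYr : cg p r Y 1.
  apply: cg_trans; first exact: (cg_le (leqnSn _) hY1).
  exact: cg_mult.
have hYp : cg p r.+2 (Y ^+ p) (1 + (p ^ r.+1)%:R *: Btot C N).
  have h1 : cg p r (1 + t *: Btot C N) 1 by exact: cg_mult.
  apply: cg_trans; first exact: (pow2 pp r1 hp hY1 h1).
  exact: pow1.
pose s : R := (p ^ r.+1)%:R.
pose D : 'M[R]_n := 1 - (s * \tr C) *: delta_mx N N.
have hZD : cg p r.+2 (Y ^+ p) (Z * D).
  apply: cg_trans; first exact: hYp.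
  apply: cg_sym.
  have -> : D = 1 + s *: (- (\tr C *: delta_mx N N)) by rewrite /D scalerN scalerA.
  rewrite hC mul_lin sqp BtotE; apply: cg_mult; lia.
have [y hy] := det_cg hZD.
move: hy; rewrite det_pow dY expr1n -[Z * D]/(Z *m D) det_mulmx (proj1 hZ) mul1r.
rewrite det_diagN opprB addrC subrK => hy.
have htr := cancelp hb p0 hy.
exists Y; split; first by split; [exact: dY | exact/cgP].
apply/cgP; rewrite mxpowE; apply: cg_trans; first exact: hYp.
rewrite BtotE htr hC scalerBr scalerA mulrA -natrM -expnSr -scalerA addrA -scalerN.
exact: cg_mult.
Qed.



Lemma addKB (V : zmodType) (a b c : V) : (a + b) - (a + c) = b - c.
Proof. by rewrite opprD addrACA subrr add0r. Qed.

Theorem proposition4p5 (R : comPzRingType) (I : eqType) (v : I -> R)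
  (n p r : nat) :
  is_Zbasis v -> (2 <= n)%N -> prime p -> (1 <= r)%N -> (p != 2%N \/ (1 < r)%N) ->
  (forall X : 'M[R]_n, Gamma p r X -> Gamma p r.+1 (mxpow X p)) /\
  (forall X Y : 'M[R]_n, Gamma p r X -> Gamma p r Y ->
     mx_congr p r.+1 X Y -> mx_congr p r.+2 (mxpow X p) (mxpow Y p)) /\
  (forall X Y : 'M[R]_n, Gamma p r X -> Gamma p r Y ->
     mx_congr p r.+2 (mxpow (X *m Y) p) (mxpow X p *m mxpow Y p)) /\
  (forall X Y : 'M[R]_n, Gamma p r X -> Gamma p r Y ->
     mx_congr p r.+2 (mxpow X p) (mxpow Y p) -> mx_congr p r.+1 X Y) /\
  (forall Z : 'M[R]_n, Gamma p r.+1 Z ->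
     exists X : 'M[R]_n, Gamma p r X /\ mx_congr p r.+2 (mxpow X p) Z) /\
  (forall (i j : 'I_n) (k : I), (i + j < 2 * n - 2)%N ->
     forall X : 'M[R]_n, Gamma p r X -> mx_congr p r.+1 X (Amx p r i j (v k)) ->
       mx_congr p r.+2 (mxpow X p) (Amx p r.+1 i j (v k))).
Proof.
move=> hb n2 pp r1 hp; have p0 := prime_gt0 pp.
have G1 : forall X : 'M[R]_n, Gamma p r X -> cg p r X 1 by move=> X [_ /cgP].
split.
  move=> X hX; split; first by rewrite mxpowE det_pow (proj1 hX) expr1n.
  have [B hB] := Gamma_ex hX.
  apply/cgP; rewrite mxpowE hB.
  apply: cg_trans; first exact: (cg_le (leqnSn _) (pow1 B pp r1 hp)).
  exact: cg_mult.
split.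
  move=> X Y hX hY /cgP hXY; apply/cgP; rewrite !mxpowE.
  exact: pow2 pp r1 hp hXY (G1 _ hY).
split.
  move=> X Y hX hY; apply/cgP; rewrite !mxpowE.
  have [B hB] := Gamma_ex hX; have [C hC] := Gamma_ex hY.
  have hXY : cg p r.+1 (X *m Y) (1 + (p ^ r)%:R *: (B + C)).
    rewrite hB hC -[_ *m _]/((1 + _) * (1 + _)) mul_lin sqp.
    apply: cg_mult; lia.
  apply: cg_trans; first apply: pow2 pp r1 hp hXY _; first exact: cg_mult.
  apply: cg_trans; first exact: pow1.
  apply: cg_sym; rewrite -[_ *m _]/(_ * _) hB hC.
  apply: cg_trans; first exact: (cg_mul (pow1 B pp r1 hp) (pow1 C pp r1 hp)).
  rewrite mul_lin sqp; apply: cg_mult; lia.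
split.
  move=> X Y hX hY /cgP h; apply/cgP.
  have [B hB] := Gamma_ex hX; have [C hC] := Gamma_ex hY.
  rewrite !mxpowE hB hC in h.
  have h2 : cg p r.+2 (1 + (p ^ r.+1)%:R *: B) (1 + (p ^ r.+1)%:R *: C).
    apply: cg_trans; first by apply: cg_sym; exact: pow1.
    apply: cg_trans; first exact: h.
    exact: pow1.
  move: h2 => /cgP h2; apply/cgP => a b.
  have [y hy] := h2 a b.
  move: hy; rewrite !mxE addKB -mulrBr => hy.
  have := cancelp hb p0 hy => hd.
  exists y; rewrite hB hC !mxE addKB -mulrBr hd mulrA -natrM -expnSr //.
split; first exact: (surj hb n2 pp r1 hp).
move=> i j k _ X hX /cgP hXA; apply/cgP; rewrite mxpowE.
apply: cg_trans; first apply: (pow2 pp r1 hp hXA).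
  by rewrite AmxE; exact: cg_mult.
by rewrite !AmxE; exact: pow1.
Qed.
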